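(* Let $G=(V,E)$ be a graph and, for each $(u,v)\in E$, let $\mathcal P_{u,v}$ be the set of stretch-$k$ paths from $u$ to $v$. A vector $\mathbf x\in\mathbb R^{E}$ is feasible for $\text{LP}_{Spanner}$ if and only if there exist values $f_P$ for each $(u,v)\in E$ and $P\in\mathcal P_{u,v}$ such that $(\mathbf x,\mathbf f)$ is feasible for $\text{LP}^{Flow}_{Spanner}$.
   Context: $\text{LP}^{Flow}_{Spanner}$ has variables $x_e$ ($e\in E$) and $f_P$ ($(u,v)\in E$, $P\in\mathcal P_{u,v}$) and constraints: $\sum_{P\in\mathcal P_{u,v}:e\in P}f_P\le x_e$ for all $(u,v)\in E$ and $e\in E$; $\sum_{P\in\mathcal P_{u,v}}f_P\ge1$ for all $(u,v)\in E$; $x_e\ge0$; $f_P\ge0$ (objective $\min\sum_e x_e$). With $\mathcal Z^{u,v}=\{\mathbf z\in[0,1]^{E}:\sum_{e\in P}z_e\ge1\ \forall P\in\mathcal P_{u,v}\}$, $\text{LP}_{Spanner}$ has variables $x_e$ ($e\in E$) and constraints $\sum_{e\in E}z_ex_e\ge1$ for all $(u,v)\in E$ and all $\mathbf z\in\mathcal Z^{u,v}$, and $x_e\ge0$ for all $e\in E$ (objective $\min\sum_e x_e$). A stretch-$k$ path from $u$ to $v$ is a $u$-to-$v$ path in $G$ of length at most $k\cdot d_G(u,v)$. *)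

(* Defs.v *)
From HB Require Import structures.
From mathcomp Require Import all_boot all_order all_algebra.
Set Implicit Arguments. Unset Strict Implicit. Unset Printing Implicit Defensive.
Import Order.TTheory GRing.Theory Num.Theory.
Local Open Scope ring_scope.

Section Spanner.
Variables (V : finType) (E : {set V * V}).

Definition pedges (p : seq V) : seq (V * V) := zip p (behead p).

Definition plen (p : seq V) : nat := (size p).-1.

Definition is_path (u v : V) (p : seq V) : bool :=
  [&& p != [::], head u p == u, last u p == v, uniq p &
      all (fun e => e \in E) (pedges p)].

(* All duplicate-free vertex sequences (a finite superset of all simple paths). *)
Definition all_useqs : seq (seq V) :=
  undup (flatten [seq [seq tval t | t : i.-tuple V] | i <- iota 0 #|V|.+1]).

(* Hop distance d_G(u,v): minimum length of a u-v path (= #|V| if none). *)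
Definition dist (u v : V) : nat :=
  \big[minn/#|V|]_(p <- all_useqs | is_path u v p) plen p.

Definition stretch_paths (R : numDomainType) (k : R) (u v : V) : seq (seq V) :=
  [seq p <- all_useqs | is_path u v p && ((plen p)%:R <= k * (dist u v)%:R)].

(* Feasibility for LP^Flow_Spanner, with f (u,v) P the variable f_P. *)
Definition LP_flow_feasible (R : numDomainType) (k : R)
    (x : V * V -> R) (f : V * V -> seq V -> R) : Prop :=
  [/\ (forall uv, uv \in E -> forall e, e \in E ->
         \sum_(P <- stretch_paths k uv.1 uv.2 | e \in pedges P) f uv P <= x e),
      (forall uv, uv \in E -> 1 <= \sum_(P <- stretch_paths k uv.1 uv.2) f uv P),
      (forall e, e \in E -> 0 <= x e) &
      (forall uv, uv \in E -> forall P, P \in stretch_paths k uv.1 uv.2 -> 0 <= f uv P)].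

Definition in_Z (R : numDomainType) (k : R) (u v : V) (z : V * V -> R) : Prop :=
  (forall e, e \in E -> 0 <= z e <= 1) /\
  (forall P, P \in stretch_paths k u v -> 1 <= \sum_(e <- pedges P) z e).

Definition LP_spanner_feasible (R : numDomainType) (k : R) (x : V * V -> R) : Prop :=
  (forall uv, uv \in E -> forall z, in_Z k uv.1 uv.2 z ->
      1 <= \sum_(e in E) z e * x e) /\
  (forall e, e \in E -> 0 <= x e).

End Spanner.

(* Main.v *)
Require Import Defs.
From HB Require Import structures.
From mathcomp Require Import all_boot all_order all_algebra.
From mathcomp Require Import ring lra.
From Stdlib Require Import ClassicalEpsilon.
Set Implicit Arguments. Unset Strict Implicit. Unset Printing Implicit Defensive.
Import Order.TTheory GRing.Theory Num.Theory.
Local Open Scope ring_scope.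
Section FM.
Variables (R : realFieldType) (T : finType).
Notation C := ({ffun T -> R} * R)%type.

Definition sat (y : T -> R) (c : C) := \sum_t c.1 t * y t <= c.2.

Inductive deriv (cs : seq C) : C -> Prop :=
| dIn c : c \in cs -> deriv cs c
| dAdd c1 c2 : deriv cs c1 -> deriv cs c2 ->
    deriv cs ([ffun t => c1.1 t + c2.1 t], c1.2 + c2.2)
| dScale l c : 0 <= l -> deriv cs c -> deriv cs ([ffun t => l * c.1 t], l * c.2)
| dWeak c b : deriv cs c -> c.2 <= b -> deriv cs (c.1, b).

Lemma deriv_ext cs (c c' : C) : deriv cs c -> (forall t, c.1 t = c'.1 t) -> c.2 = c'.2 ->
  deriv cs c'.
Proof.
move=> d h1 h2; suff -> : c' = c by [].
case: c h1 h2 {d} => a b; case: c' => a' b' /= h1 ->.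
by congr pair; apply/ffunP => t; rewrite h1.
Qed.

Lemma deriv_mono cs cs' (c : C) : (forall d, d \in cs' -> deriv cs d) -> deriv cs' c -> deriv cs c.
Proof.
move=> H; elim=> {c} [c /H //|c1 c2 _ ? _ ?|l c ? _ ?|c b _ ? ?].
- exact: dAdd.
- exact: dScale.
- exact: dWeak.
Qed.

Lemma exists_between (Ls Us : seq R) :
  (forall l u, l \in Ls -> u \in Us -> l <= u) ->
  exists t, (forall l, l \in Ls -> l <= t) /\ (forall u, u \in Us -> t <= u).
Proof.
elim: Ls => [|l Ls IH] H.
  elim: Us {H} => [|u Us [t [_ Ht]]]; first by exists 0.
  exists (Num.min u t); split => // u'; rewrite inE => /orP[/eqP->|/Ht Hu].
    by rewrite ge_min lexx.
  by rewrite ge_min Hu orbT.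
have [t [H1 H2]] : exists t, (forall l, l \in Ls -> l <= t) /\ (forall u, u \in Us -> t <= u).
  by apply: IH => l' u hl hu; apply: H => //; rewrite inE hl orbT.
exists (Num.max l t); split => [l'|u hu].
  rewrite inE => /orP[/eqP->|/H1 h]; first by rewrite le_max lexx.
  by rewrite le_max h orbT.
by rewrite ge_max H2 // andbT; apply: H => //; rewrite inE eqxx.
Qed.

Definition comb (s : T) (p q : C) : C :=
  ([ffun t => (- q.1 s) * p.1 t + p.1 s * q.1 t], (- q.1 s) * p.2 + p.1 s * q.2).

Lemma sum_split (s : T) (a y : T -> R) :
  \sum_t a t * y t = a s * y s + \sum_(t | t != s) a t * y t.
Proof. by rewrite (bigD1 s). Qed.

Theorem FM n (S : {set T}) (cs : seq C) : #|S| = n ->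
  (forall c t, c \in cs -> t \notin S -> c.1 t = 0) ->
  (exists y, forall c, c \in cs -> sat y c) \/
  (exists c, deriv cs c /\ (forall t, c.1 t = 0) /\ c.2 < 0).
Proof.
elim: n S cs => [|n IH] S cs hS hsupp.
  have S0 : S = set0 by apply/eqP; rewrite -cards_eq0 hS.
  have z c t : c \in cs -> c.1 t = 0 by move=> hc; apply: hsupp; rewrite // S0 inE.
  case: (boolP (all (fun c : C => 0 <= c.2) cs)) => [/allP hall|].
    left; exists (fun _ => 0) => c hc; rewrite /sat big1 ?hall // => t _.
    by rewrite mulr0.
  rewrite -has_predC => /hasP [c hc /=]; rewrite -ltNge => hneg.
  by right; exists c; split; [exact: dIn|split=> // t; exact: z].
have [s sS] : exists s, s \in S.
  by apply/set0Pn; rewrite -cards_eq0 hS.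
set Ps := [seq c : C <- cs | 0 < c.1 s].
set Ns := [seq c : C <- cs | c.1 s < 0].
set Zs := [seq c : C <- cs | c.1 s == 0].
set cs' := Zs ++ [seq comb s p q | p <- Ps, q <- Ns].
have hS' : #|S :\ s| = n by rewrite (cardsD1 s) sS in hS; case: hS.
have hsupp' : forall c t, c \in cs' -> t \notin S :\ s -> c.1 t = 0.
  move=> c t; rewrite mem_cat => /orP[].
    rewrite mem_filter => /andP[/eqP c0 hc]; rewrite !inE negb_and negbK.
    by case/orP => [/eqP->//|]; apply: hsupp.
  case/allpairsP => [[p q] /= [hp hq ->]].
  move: hp hq; rewrite !mem_filter => /andP[_ hp] /andP[_ hq].
  rewrite !inE negb_and negbK ffunE /=.
  case/orP => [/eqP->|ht]; first by rewrite mulNr mulrC addNr.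
  by rewrite (hsupp p t) ?(hsupp q t) // !mulr0 addr0.
have [[y Hy]|[c [dc [c0 cneg]]]] := IH _ cs' hS' hsupp'; last first.
  right; exists c; split => //; apply: deriv_mono dc => d.
  rewrite mem_cat => /orP[]; first by rewrite mem_filter => /andP[_ ?]; exact: dIn.
  case/allpairsP => [[p q] /= [hp hq ->]].
  move: hp hq; rewrite !mem_filter => /andP[hp pin] /andP[hq qin].
  have h1 : deriv cs ([ffun t => - q.1 s * p.1 t], - q.1 s * p.2).
    by apply: dScale; [rewrite oppr_ge0 ltW|exact: dIn].
  have h2 : deriv cs ([ffun t => p.1 s * q.1 t], p.1 s * q.2).
    by apply: dScale; [rewrite ltW|exact: dIn].
  by apply: deriv_ext (dAdd h1 h2) _ _ => [t|]; rewrite /= ?ffunE.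
left.
pose Rc (c : C) := \sum_(t | t != s) c.1 t * y t.
pose U (c : C) := (c.2 - Rc c) / c.1 s.
pose L (c : C) := (c.2 - Rc c) / c.1 s.
have [tau [Htl Htu]] : exists tau, (forall l, l \in map L Ns -> l <= tau) /\
    (forall u, u \in map U Ps -> tau <= u).
  apply: exists_between => _ _ /mapP[q hq ->] /mapP[p hp ->].
  have hc : comb s p q \in cs'.
    by rewrite mem_cat; apply/orP; right; apply/allpairsP; exists (p, q).
  move: (Hy _ hc); rewrite /sat (sum_split s) /= !ffunE.
  have -> : \sum_(t | t != s) (comb s p q).1 t * y t =
           - q.1 s * Rc p + p.1 s * Rc q.
    by rewrite /Rc !mulr_sumr -big_split /=; apply: eq_bigr => t _; rewrite !ffunE; ring.
  move: hp hq; rewrite !mem_filter => /andP[hp _] /andP[hq _].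
  rewrite /L /U => h.
  set a := p.1 s in hp h *; set b := q.1 s in hq h *.
  rewrite ler_ndivrMr // mulrAC ler_pdivrMr //.
  nra.
exists (fun t => if t == s then tau else y t) => c hc.
rewrite /sat (sum_split s) eqxx.
have -> : \sum_(t | t != s) c.1 t * (if t == s then tau else y t) = Rc c.
  by apply: eq_bigr => t /negbTE ->.
case: (ltrgtP (c.1 s) 0) => hcs.
- have : L c <= tau by apply: Htl; apply: map_f; rewrite mem_filter hcs.
  rewrite /L ler_ndivrMr // => h; rewrite mulrC; lra.
- have : tau <= U c by apply: Htu; apply: map_f; rewrite mem_filter hcs.
  rewrite /U ler_pdivlMr // => h; rewrite mulrC; lra.
- have hc' : c \in cs' by rewrite mem_cat mem_filter hcs eqxx hc.
  by move: (Hy _ hc'); rewrite /sat (sum_split s) hcs !mul0r add0r.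
Qed.
End FM.
Section Main.
Variables (R : realFieldType) (V : finType) (E : {set V * V}) (k : R) (x : V * V -> R).

Lemma mem_sp u v P : P \in stretch_paths E k u v ->
  uniq (pedges P) /\ (forall e, e \in pedges P -> e \in E).
Proof.
rewrite mem_filter => /andP[/andP[hp _] _].
move: hp; rewrite /is_path => /and5P[_ _ _ hu /allP ha]; split => //.
exact: zip_uniql.
Qed.

Lemma uniq_sp u v : uniq (stretch_paths E k u v).
Proof. by rewrite filter_uniq // undup_uniq. Qed.

Lemma sum_pedges u v P (g : V * V -> R) : P \in stretch_paths E k u v ->
  \sum_(e <- pedges P) g e = \sum_(e in E | e \in pedges P) g e.
Proof.
move=> /mem_sp [hu hs]; rewrite big_uniq //; apply: eq_bigl => e.
by case h: (e \in pedges P); rewrite ?andbF // (hs _ h).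
Qed.

Lemma sum_ind (s : seq (V * V)) (g : V * V -> R) :
  \sum_(e in E) g e * (e \in s)%:R = \sum_(e in E | e \in s) g e.
Proof.
by rewrite big_mkcondr; apply: eq_bigr => e _; case: (e \in s); rewrite ?mulr1 ?mulr0.
Qed.

Lemma flow_to_spanner f : LP_flow_feasible E k x f -> LP_spanner_feasible E k x.
Proof.
case=> hcap hdem hx hf; split => // uv huv z [hz hZ].
set Ps := stretch_paths E k uv.1 uv.2.
have step1 : \sum_(e in E) z e * (\sum_(P <- Ps | e \in pedges P) f uv P) <=
             \sum_(e in E) z e * x e.
  apply: ler_sum => e he; apply: ler_wpM2l; first by case/andP: (hz e he).
  exact: hcap.
apply: le_trans step1.
have -> : \sum_(e in E) z e * (\sum_(P <- Ps | e \in pedges P) f uv P) =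
          \sum_(P <- Ps) f uv P * \sum_(e in E | e \in pedges P) z e.
  rewrite (eq_bigr (fun e => \sum_(P <- Ps) if e \in pedges P then z e * f uv P else 0));
    last by move=> e _; rewrite mulr_sumr big_mkcond.
  rewrite exchange_big /=; apply: eq_bigr => P _.
  rewrite mulr_sumr big_mkcondr; apply: eq_bigr => e _.
  by case: (e \in pedges P); rewrite // mulrC.
apply: le_trans (hdem _ huv) _.
rewrite big_seq [X in _ <= X]big_seq; apply: ler_sum => P hP.
rewrite -{1}(mulr1 (f uv P)); apply: ler_wpM2l; first exact: hf.
by rewrite -(sum_pedges _ hP); apply: hZ.
Qed.

Lemma sum0 (g : V * V -> R) : \sum_(e in E) 0 * g e = 0.
Proof. by rewrite big1 // => e _; rewrite mul0r. Qed.

Section PerEdge.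
Variables (u v : V).
Let Ps := stretch_paths E k u v.
Let m := size Ps.
Let w (e : V * V) (j : 'I_m) : R := (e \in pedges (nth [::] Ps j))%:R.
Let C := ({ffun 'I_m -> R} * R)%type.
Let cN (i : 'I_m) : C := ([ffun j => - (j == i)%:R], 0).
Let cE (e : V * V) : C := ([ffun j => w e j], x e).
Let c1 : C := ([ffun j => -1], -1).
Let cs : seq C := map cN (enum 'I_m) ++ map cE (enum E) ++ [:: c1].

Let Q (c : C) := exists (mu : V * V -> R) (nu : R) (lam : 'I_m -> R),
  [/\ (forall e, 0 <= mu e), 0 <= nu, (forall j, 0 <= lam j),
      (forall j, c.1 j = - lam j + \sum_(e in E) mu e * w e j - nu) &
      \sum_(e in E) mu e * x e - nu <= c.2].

Lemma derivQ c : deriv cs c -> Q c.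
Proof.
elim=> {c} [c|c1' c2' _ [mu1 [nu1 [l1 [hm1 hn1 hl1 he1 hb1]]]]
             _ [mu2 [nu2 [l2 [hm2 hn2 hl2 he2 hb2]]]]
           |l c hl _ [mu1 [nu1 [l1 [hm1 hn1 hl1 he1 hb1]]]]
           |c b _ [mu1 [nu1 [l1 [hm1 hn1 hl1 he1 hb1]]]] hb].
- rewrite !mem_cat => /or3P[/mapP[i _ ->]|/mapP[e he ->]|].
  + exists (fun _ => 0), 0, (fun j => (j == i)%:R); split => //=.
    * by move=> j; rewrite ffunE sum0 subr0 addr0.
    * by rewrite sum0 subr0.
  + rewrite mem_enum in he.
    have hsum (g : V * V -> R) : \sum_(e' in E) (e' == e)%:R * g e' = g e.
      rewrite (bigD1 e) //= eqxx mul1r big1 ?addr0 // => e' /andP[_ /negbTE ->].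
      by rewrite mul0r.
    exists (fun e' => (e' == e)%:R), 0, (fun _ => 0); split => //=.
    * by move=> j; rewrite ffunE hsum subr0 oppr0 add0r.
    * by rewrite hsum subr0.
  + rewrite inE => /eqP ->.
    exists (fun _ => 0), 1, (fun _ => 0); split => //=.
    * by move=> j; rewrite ffunE sum0 oppr0 add0r sub0r.
    * by rewrite sum0 sub0r.
- exists (fun e => mu1 e + mu2 e), (nu1 + nu2), (fun j => l1 j + l2 j); split.
  + by move=> e; rewrite addr_ge0.
  + by rewrite addr_ge0.
  + by move=> j; rewrite addr_ge0.
  + move=> j; rewrite /= ffunE he1 he2.
    under eq_bigr do rewrite mulrDl.
    rewrite big_split /=; lra.
  + rewrite /=; under eq_bigr do rewrite mulrDl.
    rewrite big_split /=; lra.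
- exists (fun e => l * mu1 e), (l * nu1), (fun j => l * l1 j); split.
  + by move=> e; rewrite mulr_ge0.
  + by rewrite mulr_ge0.
  + by move=> j; rewrite mulr_ge0.
  + move=> j; rewrite /= ffunE he1.
    under eq_bigr do rewrite -mulrA.
    rewrite -mulr_sumr; ring.
  + rewrite /=; under eq_bigr do rewrite -mulrA.
    rewrite -mulr_sumr -mulrBr; exact: ler_wpM2l.
- exists mu1, nu1, l1; split => //; exact: le_trans hb.
Qed.

Lemma per_edge :
  (forall z, in_Z E k u v z -> 1 <= \sum_(e in E) z e * x e) ->
  (forall e, e \in E -> 0 <= x e) ->
  exists g : seq V -> R,
    [/\ (forall e, e \in E -> \sum_(P <- Ps | e \in pedges P) g P <= x e),
        1 <= \sum_(P <- Ps) g P &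
        (forall P, P \in Ps -> 0 <= g P)].
Proof.
move=> Hsp hx.
have supp : forall (c : C) t, c \in cs -> t \notin [set: 'I_m] -> c.1 t = 0.
  by move=> c t _; rewrite inE.
case: (FM (erefl #|[set: 'I_m]|) supp) => [[y Hy]|[c [dc [c0 cneg]]]].
  pose g P := oapp y 0 (insub (index P Ps) : option 'I_m).
  have gnth (i : 'I_m) : g (nth [::] Ps i) = y i.
    by rewrite /g index_uniq ?uniq_sp // valK.
  exists g; split.
  - move=> e he.
    have hm : cE e \in cs by rewrite !mem_cat map_f ?orbT ?mem_enum.
    have := Hy _ hm; rewrite /sat /= => h.
    apply: le_trans h; rewrite le_eqVlt; apply/orP; left; apply/eqP.
    rewrite (big_nth [::]) big_mkord big_mkcond; apply: eq_bigr => i _.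
    rewrite ffunE gnth /w; case: (e \in _); by rewrite ?mul1r ?mul0r.
  - have hm : c1 \in cs by rewrite !mem_cat mem_head !orbT.
    have := Hy _ hm; rewrite /sat /= => h.
    rewrite (big_nth [::]) big_mkord.
    have -> : \sum_(i < m) g (nth [::] Ps i) = - \sum_t [ffun=> -1 : R] t * y t.
      rewrite -sumrN; apply: eq_bigr => i _; by rewrite ffunE gnth mulN1r opprK.
    lra.
  - move=> P hP.
    have hi : (index P Ps < m)%N by rewrite index_mem.
    pose i := Ordinal hi.
    have -> : g P = y i by rewrite -gnth /= nth_index.
    have hm : cN i \in cs by rewrite !mem_cat map_f ?mem_enum.
    have := Hy _ hm; rewrite /sat /= => h.
    move: h; rewrite (bigD1 i) //= big1 => [|j /negbTE hj]; last by rewrite ffunE hj oppr0 mul0r.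
    by rewrite ffunE eqxx addr0 mulN1r oppr_le0.
exfalso.
have [mu [nu [lam [hmu hnu hlam heq hb]]]] := derivQ dc.
have hmx : 0 <= \sum_(e in E) mu e * x e.
  by apply: sumr_ge0 => e he; rewrite mulr_ge0 ?hmu ?hx.
have nupos : 0 < nu by lra.
pose z e := Num.min (mu e / nu) 1.
have z0 e : 0 <= z e by rewrite le_min divr_ge0 ?hmu ?ltW // ler01.
have hz : in_Z E k u v z.
  split.
    by move=> e _; rewrite z0 ge_min lexx orbT.
  move=> P hP; rewrite (sum_pedges _ hP).
  have hi : (index P Ps < m)%N by rewrite index_mem.
  pose i := Ordinal hi.
  have nthP : nth [::] Ps i = P by rewrite /= nth_index.
  have := heq i; rewrite c0 /w nthP sum_ind => hS.
  have {}hS : nu <= \sum_(e in E | e \in pedges P) mu e by move: (hlam i); lra.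
  case: (boolP [exists e, [&& e \in E, e \in pedges P & 1 <= mu e / nu]]).
    move/existsP => [e /and3P[he hep h1]].
    rewrite (bigD1 e) /=; last by rewrite he hep.
    have -> : z e = 1 by rewrite /z min_r.
    rewrite lerDl; apply: sumr_ge0 => e' _; exact: z0.
  rewrite negb_exists => /forallP hall.
  have -> : \sum_(e in E | e \in pedges P) z e = \sum_(e in E | e \in pedges P) mu e / nu.
    apply: eq_bigr => e /andP[he hep]; have := hall e.
    rewrite he hep /= -ltNge => hlt; by rewrite /z min_l // ltW.
  by rewrite -mulr_suml ler_pdivlMr // mul1r.
have h1 := Hsp z hz.
have h2 : \sum_(e in E) z e * x e <= (\sum_(e in E) mu e * x e) / nu.
  rewrite mulr_suml; apply: ler_sum => e he; rewrite mulrAC; apply: ler_wpM2r; first exact: hx.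
  by rewrite ge_min lexx.
have h3 : (\sum_(e in E) mu e * x e) / nu < 1 by rewrite ltr_pdivrMr // mul1r; lra.
lra.
Qed.
End PerEdge.

Theorem main_thm : LP_spanner_feasible E k x <->
  exists f : V * V -> seq V -> R, LP_flow_feasible E k x f.
Proof.
split; last by case=> f; exact: flow_to_spanner.
case=> Hsp hx.
have H : forall uv : V * V, exists g : seq V -> R, uv \in E ->
    [/\ (forall e, e \in E -> \sum_(P <- stretch_paths E k uv.1 uv.2 | e \in pedges P) g P <= x e),
        1 <= \sum_(P <- stretch_paths E k uv.1 uv.2) g P &
        (forall P, P \in stretch_paths E k uv.1 uv.2 -> 0 <= g P)].
  move=> uv; case: (boolP (uv \in E)) => huv; last by exists (fun _ => 0).
  have [g hg] := per_edge (Hsp uv huv) hx.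
  by exists g.
pose f uv := proj1_sig (constructive_indefinite_description _ (H uv)).
have hf uv := proj2_sig (constructive_indefinite_description _ (H uv)).
exists f; split => //.
- by move=> uv huv; case: (hf uv huv).
- by move=> uv huv; case: (hf uv huv).
- by move=> uv huv; case: (hf uv huv).
Qed.
End Main.

Theorem theorem5 (R : realFieldType) (V : finType) (E : {set V * V}) (k : R)
    (x : V * V -> R) :
  LP_spanner_feasible E k x <->
  exists f : V * V -> seq V -> R, LP_flow_feasible E k x f.
Proof. exact: main_thm. Qed.
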